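(* Let $z\ge0$ and let $(C,F)$ be a $z$-antler in an undirected multigraph $G$. Then there exists $F'\subseteq F$ such that $(C,F')$ is a $z$-antler in $G$ and $G[F']$ has at most $\frac{|C|}{2}(z^2+2z-1)$ trees.
   Context: A feedback vertex set (FVS) of $G$ is a set $X\subseteq V(G)$ with $G-X$ acyclic (self-loops and pairs of parallel edges count as cycles); $\mathrm{fvs}(G)$ is its minimum size. For disjoint $X,Y$, $e(X,Y)$ is the number of edges between $X$ and $Y$. A feedback vertex cut (FVC) in $G$ is a pair of disjoint sets $C,F\subseteq V(G)$ such that $G[F]$ is a forest and every tree $T$ of $G[F]$ satisfies $e(V(T),V(G)\setminus(C\cup F))\le1$. An antler is a FVC $(C,F)$ with $|C|\le\mathrm{fvs}(G[C\cup F])$. For $C\subseteq V(G)$, a $C$-certificate is a subgraph $H$ of $G$ such that $C$ is a minimum FVS of $H$; it has order $z$ if every component $H'$ of $H$ satisfies $\mathrm{fvs}(H')=|C\cap V(H')|\le z$. A $z$-antler is an antler $(C,F)$ such that $G[C\cup F]$ contains a $C$-certificate of order $z$. *)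

(* Defs.v *)
From mathcomp Require Import all_boot all_order all_algebra.
Set Implicit Arguments. Unset Strict Implicit. Unset Printing Implicit Defensive.

(* A finite undirected multigraph on a finite vertex type V is given by a
   multiplicity function m : V -> V -> nat, assumed symmetric (m x y = m y x);
   m x y is the number of edges between x and y, and m x x the number of
   self-loops at x. *)

Section MGraph.
Variable V : finType.
Implicit Types (m : V -> V -> nat) (S X Y C F : {set V}).

Definition acyclic_on m S : bool :=
  [&& [forall x in S, m x x == 0],
      [forall x in S, forall y in S, (x != y) ==> (m x y <= 1)]
    & ~~ [exists n : 'I_(#|V|).+1, exists t : n.-tuple V,
            [&& 3 <= n, uniq t, all (fun v => v \in S) t
              & cycle (fun a b => 0 < m a b) t]]].

Definition is_fvs m S X : bool := (X \subset S) && acyclic_on m (S :\: X).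

(* fvs = minimum size of a feedback vertex set (S itself is always one) *)
Definition fvs m S : nat :=
  \big[minn/#|S|]_(X : {set V} | is_fvs m S X) #|X|.

Definition is_min_fvs m S X : bool := is_fvs m S X && (#|X| == fvs m S).

Definition adj m S : rel V := fun x y => [&& x \in S, y \in S & 0 < m x y].

Definition components m S : {set {set V}} :=
  [set [set y in S | connect (adj m S) x y] | x in S].

Definition e m X Y : nat := \sum_(x in X) \sum_(y in Y) m x y.

Definition FVC m C F : bool :=
  [&& [disjoint C & F], acyclic_on m F
    & [forall T in components m F, e m T (~: (C :|: F)) <= 1]].

Definition antler m C F : bool := FVC m C F && (#|C| <= fvs m (C :|: F)).

Definition subgraph_of m (W : {set V}) S (mH : V -> V -> nat) : Prop :=
  [/\ S \subset W,
      (forall x y, mH x y <= m x y),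
      (forall x y, mH x y = mH y x)
    & (forall x y, 0 < mH x y -> (x \in S) && (y \in S))].

Definition certificate_of_order (z : nat) C S (mH : V -> V -> nat) : Prop :=
  is_min_fvs mH S C /\
  forall K, K \in components mH S ->
    fvs mH K = #|C :&: K| /\ #|C :&: K| <= z.

Definition z_antler m (z : nat) C F : Prop :=
  antler m C F /\
  exists (S : {set V}) (mH : V -> V -> nat),
    subgraph_of m (C :|: F) S mH /\ certificate_of_order z C S mH.

End MGraph.

(* Main.v *)
Require Import Defs.
From mathcomp Require Import all_boot all_order all_algebra.
From mathcomp Require Import zify ring.
Set Implicit Arguments. Unset Strict Implicit. Unset Printing Implicit Defensive.

Section Basics.
Variable V : finType.
Implicit Types (m : V -> V -> nat) (S T A B X Y Q K : {set V}).

Lemma acycP m S :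
  reflect [/\ forall x, x \in S -> m x x = 0,
              forall x y, x \in S -> y \in S -> x != y -> m x y <= 1
            & forall s : seq V, 3 <= size s -> uniq s -> all (mem S) s ->
                 cycle (fun a b => 0 < m a b) s -> False]
          (acyclic_on m S).
Proof.
apply: (iffP and3P).
  move=> [/forallP H1 /forallP H2 H3]; split.
- by move=> x xS; have /implyP/(_ xS)/eqP := H1 x.
- move=> x y xS yS nxy; have /implyP/(_ xS)/forallP/(_ y)/implyP/(_ yS)/implyP := H2 x.
  by apply.
- move=> s s3 us als cs; move/negP: H3; apply; apply/existsP.
  have szs : size s < #|V|.+1 by rewrite ltnS -(card_uniqP us) max_card.
  exists (Ordinal szs); apply/existsP; exists (in_tuple s) => /=.
  by rewrite s3 us cs andbT; apply: sub_all als => v; rewrite inE.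
move=> [H1 H2 H3]; split.
- by apply/forallP => x; apply/implyP => xS; rewrite H1.
- apply/forallP => x; apply/implyP => xS; apply/forallP => y; apply/implyP => yS.
  by apply/implyP; apply: H2.
- apply/negP => /existsP [n /existsP [t /and4P [n3 ut alt ct]]].
  apply: (H3 t) => //; rewrite ?size_tuple //.
Qed.

Lemma acyc_sub m m' S T : acyclic_on m S -> T \subset S ->
  (forall x y, x \in T -> y \in T -> m' x y <= m x y) -> acyclic_on m' T.
Proof.
move=> /acycP [H1 H2 H3] /subsetP TS le; apply/acycP; split.
- by move=> x xT; apply/eqP; rewrite -leqn0 -(H1 x (TS x xT)) le.
- by move=> x y xT yT nxy; apply: leq_trans (le _ _ xT yT) (H2 _ _ (TS _ xT) (TS _ yT) nxy).
- move=> s s3 us als cs; apply: (H3 s s3 us).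
    by apply/allP => v /(allP als); rewrite !inE; apply: TS.
  apply: (sub_in_cycle (P := mem T)) cs => //.
  by move=> x y xT yT /= h; apply: leq_trans h (le _ _ xT yT).
Qed.

Lemma acyc_agree m1 m2 T : (forall x y, x \in T -> y \in T -> m1 x y = m2 x y) ->
  acyclic_on m1 T = acyclic_on m2 T.
Proof.
move=> E; apply/idP/idP => H; apply: acyc_sub H (subxx _) _ => x y xT yT;
  by rewrite E.
Qed.

Lemma acyc0 m : acyclic_on m set0.
Proof.
apply/acycP; split; [by move=> x; rewrite inE| by move=> x y; rewrite inE|].
move=> [|x s] //= _ _ /andP[]; by rewrite inE.
Qed.

Lemma fvs_le m S X : is_fvs m S X -> fvs m S <= #|X|.
Proof.
move=> h; rewrite /fvs.
have : X \in index_enum {set V} by rewrite mem_index_enum.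
elim: (index_enum _) => [//|y r IH]; rewrite inE big_cons.
case/orP => [/eqP <-|Xr]; first by rewrite h geq_minl.
by case: ifP => _; [apply: leq_trans (geq_minr _ _) (IH Xr)| apply: IH].
Qed.

Lemma fvs_ge m S n : (forall X, is_fvs m S X -> n <= #|X|) -> n <= fvs m S.
Proof.
move=> H; rewrite /fvs; apply: (big_ind (fun v => n <= v)).
- by apply: H; rewrite /is_fvs subxx setDv acyc0.
- by move=> a b ha hb; rewrite leq_min ha hb.
- by move=> X; apply: H.
Qed.

Lemma sum_in_card A B : \sum_(x in A) (x \in B : nat) = #|A :&: B|.
Proof.
symmetry; rewrite -sum1_card (eq_bigl (fun x => (x \in A) && (x \in B))); last first.
  by move=> x; rewrite inE.
by rewrite big_mkcondr /=; apply: eq_bigr => x _; case: (x \in B).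
Qed.


Definition cc m S x := [set y in S | connect (adj m S) x y].

Lemma path_adj_all m Q a p : path (adj m Q) a p -> all (mem Q) p.
Proof.
elim: p a => [//|y p IH] a /= /andP[/and3P[_ yQ _] /IH ->]; by rewrite andbT yQ.
Qed.

Lemma conn_in m S x y : connect (adj m S) x y -> x \in S -> y \in S.
Proof.
move=> /connectP [p pp ->] xS; have := mem_last x p; rewrite inE => /orP[/eqP->//|].
by move/(allP (path_adj_all pp)); rewrite inE.
Qed.

Lemma conn_mono m m' S S' x y : S \subset S' ->
  (forall a b, 0 < m a b -> 0 < m' a b) ->
  connect (adj m S) x y -> connect (adj m' S') x y.
Proof.
move=> /subsetP SS' mm'; apply: connect_sub => a b /and3P[aS bS ab].
by apply: connect1; rewrite /adj (SS' _ aS) (SS' _ bS) mm'.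
Qed.

Lemma uniq_path_of m Q a b : connect (adj m Q) a b ->
  exists p, [/\ path (adj m Q) a p, last a p = b & uniq (a :: p)].
Proof.
move=> /connectP [p pp ->]; case: (shortenP pp) => p' pp' up' _.
by exists p'.
Qed.

Section Sym.
Variable m : V -> V -> nat.
Hypothesis msym : forall x y, m x y = m y x.

Lemma adj_sym S : symmetric (adj m S).
Proof. by move=> x y; rewrite /adj msym andbCA. Qed.

Lemma conn_sym S x y : connect (adj m S) x y = connect (adj m S) y x.
Proof. by apply: (sym_connect_sym (adj_sym S)). Qed.

Lemma comps_cc S K : K \in components m S -> exists2 x, x \in S & K = cc m S x.
Proof. by move=> /imsetP [x xS ->]; exists x. Qed.

Lemma cc_comp S x : x \in S -> cc m S x \in components m S.
Proof. by move=> xS; apply/imsetP; exists x. Qed.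

Lemma cc_self S x : x \in S -> x \in cc m S x.
Proof. by move=> xS; rewrite inE xS connect0. Qed.

Lemma cc_sub S x : cc m S x \subset S.
Proof. by apply/subsetP => y; rewrite inE => /andP[]. Qed.

Lemma cc_eq S x y : y \in cc m S x -> cc m S y = cc m S x.
Proof.
rewrite inE => /andP[yS cxy]; apply/setP => w; rewrite !inE; case: (w \in S) => //=.
apply/idP/idP => h; first by apply: connect_trans cxy h.
by apply: connect_trans h; rewrite conn_sym.
Qed.

Lemma comp_of S K x : K \in components m S -> x \in K -> K = cc m S x.
Proof. by move=> /comps_cc [y yS ->] /cc_eq ->. Qed.

Lemma comp_sub S K : K \in components m S -> K \subset S.
Proof. by move=> /comps_cc [y yS ->]; apply: cc_sub. Qed.

Lemma comp_disj S K1 K2 x : K1 \in components m S -> K2 \in components m S ->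
  x \in K1 -> x \in K2 -> K1 = K2.
Proof. by move=> c1 c2 x1 x2; rewrite (comp_of c1 x1) (comp_of c2 x2). Qed.

Lemma comp_disjoint S K1 K2 : K1 \in components m S -> K2 \in components m S ->
  K1 != K2 -> [disjoint K1 & K2].
Proof.
move=> c1 c2 n12; rewrite -setI_eq0; apply/eqP/setP => x; rewrite !inE.
apply/negP => /andP[x1 x2].
by have E := comp_disj c1 c2 x1 x2; rewrite E eqxx in n12.
Qed.

Lemma comp_closed S K x y : K \in components m S -> x \in K -> y \in S ->
  0 < m x y -> y \in K.
Proof.
move=> cK xK yS mxy; rewrite (comp_of cK xK) inE yS /=.
apply: connect1; rewrite /adj yS mxy !andbT.
exact: (subsetP (comp_sub cK)).
Qed.

Lemma comp_conn S K x y : K \in components m S -> x \in K -> y \in K ->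
  connect (adj m K) x y.
Proof.
move=> cK xK yK.
have : y \in cc m S x by rewrite -(comp_of cK xK).
rewrite inE => /andP[yS] /connectP [p pp ->]; apply/connectP; exists p => //.
have allK : all (mem K) (x :: p).
  apply/allP => w wp; have := path_connect pp wp => cw.
  suff : w \in K by [].
  rewrite (comp_of cK xK) inE cw andbT; apply: conn_in cw _.
  exact: (subsetP (comp_sub cK)).
apply: (sub_in_path (P := mem K)) pp => // a b aK bK /and3P[_ _ ab].
by rewrite /adj aK bK ab.
Qed.

Lemma comp_subcomp S S' K K' x : S \subset S' ->
  K \in components m S -> K' \in components m S' -> x \in K -> x \in K' ->
  K \subset K'.
Proof.
move=> SS' cK cK' xK xK'; apply/subsetP => y yK.
have cxy := comp_conn cK xK yK.
rewrite (comp_of cK' xK') inE; apply/andP; split.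
  by apply: (subsetP SS'); apply: (subsetP (comp_sub cK)).
apply: conn_mono cxy => //; apply: subset_trans (comp_sub cK) SS'.
Qed.

Lemma comp_partition S : partition (components m S) S.
Proof.
apply: equivalence_partitionP => x y w _ _ _; split; first exact: connect0.
move=> cxy; apply/idP/idP => h; last by apply: connect_trans cxy h.
by apply: connect_trans h; rewrite conn_sym.
Qed.

Lemma comp_n0 S K : K \in components m S -> exists x, x \in K.
Proof. by move=> /comps_cc [x xS ->]; exists x; apply: cc_self. Qed.

Section LemG.
Variables A B : {set V}.
Hypothesis dAB : [disjoint A & B].
Hypothesis HG2 : forall b1 b2 a1 a2, b1 \in B -> connect (adj m B) b1 b2 ->
  a1 \in A -> a2 \in A -> 0 < m b1 a1 -> 0 < m b2 a2 -> b1 = b2 /\ a1 = a2.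

Lemma AnB x : x \in A -> x \in B -> False.
Proof. by move=> xA xB; move/pred0P: dAB => /(_ x) /=; rewrite xA xB. Qed.

Lemma lemG_core b r : b \in B -> cycle (fun a b => 0 < m a b) (b :: r) ->
  uniq (b :: r) -> 2 <= size r -> all (mem (A :|: B)) r -> last b r \in A -> False.
Proof.
move=> bB cr ur szr allr lA.
have lr : last b r \in r.
  have := mem_last b r; rewrite inE => /orP[/eqP E|//].
  by exfalso; apply: (AnB lA); rewrite E.
have hasA : has (mem A) r by apply/hasP; exists (last b r).
set j := find (mem A) r.
have jlt : j < size r by rewrite -has_find.
set a2 := nth b r j.
have a2A : a2 \in A by apply: (nth_find b hasA).
set p := take j r; set r' := drop j.+1 r.
have Er : r = p ++ a2 :: r' by rewrite /p /r' /a2 -drop_nth // cat_take_drop.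
have nAp : ~~ has (mem A) p by rewrite /p has_take // ltnn.
have allBp : all (mem B) (b :: p).
  apply/allP => w; rewrite inE => /orP[/eqP->//|wp].
  have wr : w \in r by rewrite Er mem_cat wp.
  have := allP allr w wr; rewrite inE in_setU => /orP[wA|//].
  by exfalso; move/hasP: nAp; apply; exists w.
move: cr; rewrite /= rcons_path => /andP[pr ebl].
move: pr; rewrite {1}Er cat_path => /andP[pbp] /= /andP[ep2 _].
have pbB : path (adj m B) b p.
  apply: (sub_in_path (P := mem B)) pbp => // x y xB yB h.
  by rewrite /adj xB yB h.
have cb : connect (adj m B) b (last b p) by exact: (path_connect pbB (mem_last b p)).
have e1 : 0 < m b (last b r) by rewrite msym.
have [E1 E2] := HG2 bB cb lA a2A e1 ep2.
case Er' : r' => [|c r''].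
  move: szr; rewrite Er Er' size_cat /=; case Ep : p => [|c p'] //= _.
  have : last b p \in p.
    by rewrite Ep /=; have := mem_last c p'.
  rewrite -E1 => bp; move: ur; rewrite /= Er mem_cat bp //.
have : last b r \in r' by rewrite Er last_cat /= Er'; have := mem_last c r''.
rewrite E2 => a2r'.
move: ur; rewrite /= Er cat_uniq /= a2r' /=.
by rewrite !andbF.
Qed.

End LemG.

Lemma lemG A B : [disjoint A & B] -> acyclic_on m A -> acyclic_on m B ->
  (forall b a, b \in B -> a \in A -> m b a <= 1) ->
  (forall b1 b2 a1 a2, b1 \in B -> connect (adj m B) b1 b2 ->
     a1 \in A -> a2 \in A -> 0 < m b1 a1 -> 0 < m b2 a2 -> b1 = b2 /\ a1 = a2) ->
  acyclic_on m (A :|: B).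
Proof.
move=> dAB /acycP [A1 A2 A3] /acycP [B1 B2 B3] HG1 HG2; apply/acycP; split.
- by move=> x; rewrite in_setU => /orP[/A1|/B1].
- move=> x y; rewrite !in_setU => /orP[xA|xB] /orP[yA|yB] nxy.
  + exact: A2.
  + by rewrite msym; apply: HG1.
  + exact: HG1.
  + exact: B2.
- move=> s s3 us als cs.
  case: (boolP (all (mem A) s)) => [alA|/allPn [x xs xnA]]; first exact: (A3 s).
  case: (boolP (all (mem B) s)) => [alB|/allPn [y ys ynB]]; first exact: (B3 s).
  have xB : x \in B.
    by move: (allP als x xs); rewrite inE in_setU => /orP[xA|//]; case/negP: xnA.
  have yA : y \in A.
    by move: (allP als y ys); rewrite inE in_setU => /orP[//|yB]; case/negP: ynB.
  case: (rot_to ys) => i s' Ei.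
  have ct : cycle (fun a b => 0 < m a b) (y :: s') by rewrite -Ei rot_cycle.
  have ut : uniq (y :: s') by rewrite -Ei rot_uniq.
  have alt : all (mem (A :|: B)) (y :: s').
    by apply/allP => w; rewrite -Ei mem_rot => /(allP als).
  have szt : 3 <= size (y :: s') by rewrite -Ei size_rot.
  have xs' : x \in s'.
    have : x \in y :: s' by rewrite -Ei mem_rot.
    rewrite inE => /orP[/eqP E|//]; exfalso; apply: (AnB dAB yA); by rewrite -E.
  have hasB : has (mem B) s' by apply/hasP; exists x.
  set k := find (mem B) s'.
  have klt : k < size s' by rewrite -has_find.
  set b := nth y s' k.
  have bB : b \in B by apply: (nth_find y hasB).
  set q := take k s'; set r1 := drop k.+1 s'.
  have Es : s' = q ++ b :: r1 by rewrite /q /r1 /b -drop_nth // cat_take_drop.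
  have nBq : ~~ has (mem B) q by rewrite /q has_take // ltnn.
  have allAq : all (mem A) (y :: q).
    apply/allP => w; rewrite inE => /orP[/eqP->//|wq].
    have ws : w \in y :: s' by rewrite inE Es mem_cat wq orbT.
    have := allP alt w ws; rewrite inE in_setU => /orP[//|wB].
    by exfalso; move/hasP: nBq; apply; exists w.
  have Et : rot (size (y :: q)) (y :: s') = b :: (r1 ++ y :: q).
    by rewrite Es -cat_cons rot_size_cat.
  apply: (lemG_core dAB HG2 bB (r := r1 ++ y :: q)).
  + by rewrite -Et rot_cycle.
  + by rewrite -Et rot_uniq.
  + by move: szt; rewrite Es /= !size_cat /= !addnS addnC.
  + apply/allP => w wr; apply: (allP alt).
    by rewrite -(mem_rot (size (y :: q))) Et inE wr orbT.
  + rewrite last_cat /=; apply: (allP allAq).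
    exact: mem_last.
Qed.

Definition posr (mm : V -> V -> nat) : rel V := fun a b => 0 < mm a b.

Lemma par_bad T c a : c \in T -> a \in T -> c != a -> 1 < m c a ->
  ~~ acyclic_on m T.
Proof.
move=> cT aT nca h; apply/negP => /acycP [_ H2 _].
by have := H2 c a cT aT nca; rewrite leqNgt h.
Qed.

Lemma adj_path_pos Q a p : path (adj m Q) a p -> path (posr m) a p.
Proof. by apply: sub_path => x y /and3P[]. Qed.

Lemma all_path_in Q a p : a \in Q -> path (adj m Q) a p -> all (mem Q) (a :: p).
Proof. by move=> aQ pp; rewrite /= (path_adj_all pp) andbT. Qed.

Lemma notin_all Q (s : seq V) c : all (mem Q) s -> c \notin Q -> c \notin s.
Proof. by move=> al; apply: contra => /(allP al). Qed.

Lemma one_bad T Q c a b : c \in T -> Q \subset T -> c \notin Q -> a \in Q ->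
  a != b -> connect (adj m Q) a b -> 0 < m c a -> 0 < m b c ->
  ~~ acyclic_on m T.
Proof.
move=> cT QT cQ aQ nab cab eca ebc; apply/negP => /acycP [_ _ H3].
have [p [pp lp up]] := uniq_path_of cab.
have alQ := all_path_in aQ pp.
apply: (H3 (c :: a :: p)).
- case: p pp lp {up alQ} => [_ /= E|//]; by rewrite E eqxx in nab.
- by rewrite cons_uniq up andbT (notin_all alQ).
- apply/allP => w; rewrite inE => /orP[/eqP->//|/(allP alQ) wQ].
  exact: (subsetP QT).
- rewrite /= eca /= rcons_path (adj_path_pos pp) /= lp.
  exact: ebc.
Qed.

Lemma two_bad T (Q1 Q2 : {set V}) c1 c2 a1 b1 a2 b2 :
  c1 \in T -> c2 \in T -> c1 != c2 -> Q1 \subset T -> Q2 \subset T ->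
  [disjoint Q1 & Q2] -> c1 \notin Q1 -> c1 \notin Q2 -> c2 \notin Q1 ->
  c2 \notin Q2 -> a1 \in Q1 -> connect (adj m Q1) a1 b1 ->
  a2 \in Q2 -> connect (adj m Q2) a2 b2 ->
  0 < m c1 a1 -> 0 < m b1 c2 -> 0 < m c2 a2 -> 0 < m b2 c1 ->
  ~~ acyclic_on m T.
Proof.
move=> c1T c2T n12 Q1T Q2T dQ c1Q1 c1Q2 c2Q1 c2Q2 a1Q cab1 a2Q cab2 e1 e2 e3 e4.
apply/negP => /acycP [_ _ H3].
have [p1 [pp1 lp1 up1]] := uniq_path_of cab1.
have [p2 [pp2 lp2 up2]] := uniq_path_of cab2.
have al1 := all_path_in a1Q pp1.
have al2 := all_path_in a2Q pp2.
have nQ12 : forall w, w \in Q1 -> w \in Q2 -> False.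
  by move=> w w1 w2; move/pred0P: dQ => /(_ w) /=; rewrite w1 w2.
apply: (H3 (c1 :: (a1 :: p1) ++ c2 :: a2 :: p2)).
- by rewrite /= size_cat /= !addnS.
- have U1 : c1 \notin (a1 :: p1) ++ c2 :: a2 :: p2.
    rewrite mem_cat negb_or (notin_all al1 c1Q1) /= in_cons negb_or n12 /=.
    exact: notin_all al2 c1Q2.
  have U2 : ~~ has (fun w => w \in a1 :: p1) (c2 :: a2 :: p2).
    apply/hasPn => w; rewrite in_cons => /orP[/eqP->|wp2].
      exact: notin_all al1 c2Q1.
    have w2 : w \in Q2 by apply: (allP al2) wp2.
    by apply/negP => /(allP al1) w1; exact: (nQ12 w).
  have U3 : c2 \notin a2 :: p2 := notin_all al2 c2Q2.
  by rewrite cons_uniq cat_uniq up1 U1 U2 /= U3 -cons_uniq up2.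
- apply/allP => w; rewrite inE mem_cat inE => /orP[/eqP->//|/orP[/(allP al1) wQ|]].
    exact: (subsetP Q1T).
  rewrite inE => /orP[/eqP->//|/(allP al2) wQ].
  exact: (subsetP Q2T).
- rewrite /= e1 /= rcons_cat cat_path (adj_path_pos pp1) /= lp1 e2 /= e3 /=.
  by rewrite rcons_path (adj_path_pos pp2) /= lp2 e4.
Qed.

End Sym.
End Basics.
Section Main.
Variable V : finType.
Variables (m mH : V -> V -> nat) (z : nat) (C F S : {set V}).
Hypothesis msym : forall x y, m x y = m y x.
Implicit Types (K Y R P T X : {set V}).
Hypothesis hsub : subgraph_of m (C :|: F) S mH.
Hypothesis hcert : certificate_of_order z C S mH.

Lemma mHsym x y : mH x y = mH y x.
Proof. by case: hsub => _ _ h _; apply: h. Qed.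
Lemma mHle x y : mH x y <= m x y.
Proof. by case: hsub => _ h _ _; apply: h. Qed.
Lemma SCF : S \subset C :|: F.
Proof. by case: hsub. Qed.
Lemma CS : C \subset S.
Proof. by case: hcert => /andP[/andP[]]. Qed.
Lemma acycW : acyclic_on mH (S :\: C).
Proof. by case: hcert => /andP[/andP[]]. Qed.
Lemma fvsS : fvs mH S = #|C|.
Proof. by case: hcert => /andP[_ /eqP]. Qed.
Lemma compK K : K \in components mH S -> fvs mH K = #|C :&: K| /\ #|C :&: K| <= z.
Proof. by case: hcert => _; apply. Qed.

Definition W := S :\: C.
Definition Pcs := components mH W.
Definition typ (P : {set V}) c1 c2 : bool :=
  if c1 == c2 then [exists a in P, 1 < mH a c1] ||
     [exists a in P, exists b in P, [&& a != b, 0 < mH a c1 & 0 < mH b c1]]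
  else [exists a in P, 0 < mH a c1] && [exists b in P, 0 < mH b c2].
Definition rk (c : V) : nat := val (enum_rank c).
Definition quota c1 c2 := if c1 == c2 then z else if rk c1 < rk c2 then z.+1 else 0.
Definition cand c1 c2 := [set P in Pcs | typ P c1 c2].
Definition chosen c1 c2 := [set P in take (quota c1 c2) (enum (cand c1 c2))].
Definition KP := \bigcup_(c1 in C) \bigcup_(c2 in C) chosen c1 c2.
Definition KV := cover KP.
Definition S2 := C :|: KV.

Lemma rk_inj c1 c2 : rk c1 = rk c2 -> c1 = c2.
Proof. by move=> E; apply: enum_rank_inj; apply: val_inj. Qed.

Lemma chosen_sub c1 c2 : chosen c1 c2 \subset cand c1 c2.
Proof. by apply/subsetP => P; rewrite inE => /mem_take; rewrite mem_enum. Qed.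

Lemma chosen_card c1 c2 : #|chosen c1 c2| = minn (quota c1 c2) #|cand c1 c2|.
Proof.
rewrite /chosen cardsE; move/card_uniqP: (take_uniq (quota c1 c2) (enum_uniq (mem (cand c1 c2)))).
by move=> ->; rewrite size_take_min cardE.
Qed.

Lemma chosen_full c1 c2 R : R \in cand c1 c2 -> R \notin chosen c1 c2 ->
  #|chosen c1 c2| = quota c1 c2.
Proof.
move=> Rc Rn; rewrite chosen_card; case: (leqP #|cand c1 c2| (quota c1 c2)) => h.
  move: Rn; rewrite /chosen take_oversize; last by rewrite -cardE.
  by rewrite inE mem_enum Rc.
by [].
Qed.

Lemma chosen_KP c1 c2 : c1 \in C -> c2 \in C -> chosen c1 c2 \subset KP.
Proof.
move=> c1C c2C; apply/subsetP => P Pc; apply/bigcupP; exists c1 => //.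
by apply/bigcupP; exists c2.
Qed.

Lemma KP_Pcs P : P \in KP -> P \in Pcs.
Proof.
move=> /bigcupP [c1 _ /bigcupP [c2 _ Pc]].
by move: (subsetP (chosen_sub c1 c2) P Pc); rewrite inE => /andP[].
Qed.

Lemma KV_W : KV \subset W.
Proof. by apply/bigcupsP => P /KP_Pcs /comp_sub. Qed.

Lemma W_S : W \subset S.
Proof. by apply: subsetDl. Qed.

Lemma S2_S : S2 \subset S.
Proof. by rewrite subUset CS /= (subset_trans KV_W W_S). Qed.

Lemma W_nC x : x \in W -> x \notin C.
Proof. by rewrite inE => /andP[]. Qed.

Lemma Pcs_nC P x : P \in Pcs -> x \in P -> x \notin C.
Proof. by move=> cP xP; apply: W_nC; apply: (subsetP (comp_sub cP)). Qed.

Lemma Pcs_notC P c : P \in Pcs -> c \in C -> c \notin P.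
Proof. by move=> cP cC; apply/negP => cP'; move: (Pcs_nC cP cP'); rewrite cC. Qed.

Lemma KP_KV P x : P \in KP -> x \in P -> x \in KV.
Proof. by move=> PK xP; apply/bigcupP; exists P. Qed.

Lemma typ_sym P c1 c2 : c1 != c2 -> typ P c1 c2 = typ P c2 c1.
Proof. by move=> n; rewrite /typ (negbTE n) eq_sym (negbTE n) andbC. Qed.

Lemma free1 (Fam : {set {set V}}) (Y : {set V}) : Fam \subset Pcs -> #|Y| < #|Fam| ->
  exists2 P, P \in Fam & [disjoint P & Y].
Proof.
move=> FP lt; case: (boolP [exists P in Fam, [disjoint P & Y]]).
  by move=> /existsP [P /andP[PF dP]]; exists P.
move=> /existsPn nd; exfalso.
have meet : forall P, P \in Fam -> exists y, y \in P :&: Y.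
  move=> P PF; have := nd P; rewrite PF /= -setI_eq0 => /set0Pn [y yPY].
  by exists y.
have [x0 _] : exists x0 : V, True.
  have : 0 < #|Fam| by apply: leq_ltn_trans lt.
  move=> /card_gt0P [P PF]; have [y _] := meet P PF; by exists y.
pose f P := odflt x0 [pick y in P :&: Y].
have fP : forall P, P \in Fam -> f P \in P :&: Y.
  move=> P PF; rewrite /f; case: pickP => [y //|h].
  by have [y yPY] := meet P PF; rewrite h in yPY.
have : #|f @: Fam| <= #|Y|.
  apply: subset_leq_card; apply/subsetP => _ /imsetP [P PF ->].
  by have := fP P PF; rewrite inE => /andP[].
rewrite card_in_imset; first by rewrite leqNgt lt.
move=> P1 P2 P1F P2F E.
have := fP P1 P1F; have := fP P2 P2F; rewrite -E !inE => /andP[h2 _] /andP[h1 _].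
by apply: (comp_disj mHsym (subsetP FP _ P1F) (subsetP FP _ P2F) h1 h2).
Qed.

Lemma free2 (Fam : {set {set V}}) (Y : {set V}) : Fam \subset Pcs -> #|Y|.+1 < #|Fam| ->
  exists P1 P2, [/\ P1 \in Fam, P2 \in Fam, P1 != P2, [disjoint P1 & Y] & [disjoint P2 & Y]].
Proof.
move=> FP lt; have [P1 P1F d1] := free1 FP (ltnW lt).
have FP' : Fam :\ P1 \subset Pcs by apply: subset_trans (subsetDl _ _) FP.
have lt' : #|Y| < #|Fam :\ P1|.
  by move: lt; rewrite (cardsD1 P1 Fam) P1F add1n ltnS.
have [P2 P2F d2] := free1 FP' lt'.
move: P2F; rewrite !inE => /andP[n21 P2F].
by exists P1, P2; split => //; rewrite eq_sym.
Qed.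


Definition AA K (Y : {set V}) := (S2 :&: K) :\: Y.
Definition BB K (Y : {set V}) := (K :\: S2) :\: Y.

Lemma kept_in_K K P x c : K \in components mH S -> P \in Pcs -> x \in P ->
  c \in K -> 0 < mH x c -> P \subset K.
Proof.
move=> cK cP xP cKc e.
have xW : x \in W by apply: (subsetP (comp_sub cP)).
have xK : x \in K.
  apply: (comp_closed mHsym cK cKc); first by apply: (subsetP W_S).
  by rewrite mHsym.
exact: (comp_subcomp mHsym W_S cP cK xP xK).
Qed.

Lemma kept_in_A K Y P : P \in KP -> [disjoint P & Y] -> P \subset K -> P \subset AA K Y.
Proof.
move=> PK dPY PKK; apply/subsetP => x xP; rewrite !inE.
have -> : x \in Y = false by apply/negP => xY; move/pred0P: dPY => /(_ x) /=; rewrite xP xY.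
by rewrite (subsetP PKK _ xP) (KP_KV PK xP) orbT.
Qed.

Lemma Dom_loop K Y R c : K \in components mH S -> R \in Pcs -> R \notin KP ->
  c \in C -> c \in AA K Y -> typ R c c -> #|Y| < z -> acyclic_on mH (AA K Y) -> False.
Proof.
move=> cK cR nR cC cA tR lt ac.
have Rc : R \in cand c c by rewrite inE cR tR.
have Rn : R \notin chosen c c by apply: contra nR; apply: (subsetP (chosen_KP cC cC)).
have cf := chosen_full Rc Rn.
have chP : chosen c c \subset Pcs.
  by apply: subset_trans (chosen_sub c c) _; apply/subsetP => P; rewrite inE => /andP[].
have [P Pch dP] : exists2 P, P \in chosen c c & [disjoint P & Y].
  by apply: free1 chP _; rewrite cf /quota eqxx.
have PKP : P \in KP by apply: (subsetP (chosen_KP cC cC)).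
have cP : P \in Pcs by apply: KP_Pcs.
have := subsetP (chosen_sub c c) P Pch; rewrite inE /typ eqxx => /andP[_].
have cKc : c \in K by move: cA; rewrite !inE => /andP[_ /andP[]].
have cnP : c \notin P by apply: Pcs_notC.
case/orP => [/existsP [a /andP[aP e]]|/existsP [a /andP[aP /existsP [b /andP[bP /and3P[nab ea eb]]]]]].
- have PA := kept_in_A PKP dP (kept_in_K cK cP aP cKc (ltnW e)).
  apply/negP: ac; apply: (par_bad cA (subsetP PA _ aP)).
    by apply: contra cnP => /eqP ->.
  by rewrite mHsym.
- have PA := kept_in_A PKP dP (kept_in_K cK cP aP cKc ea).
  apply/negP: ac; apply: (one_bad cA PA cnP aP nab).
  + exact: (comp_conn mHsym cP aP bP).
  + by rewrite mHsym.
  + exact: eb.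
Qed.

Lemma Dom_pair K Y R c1 c2 : K \in components mH S -> R \in Pcs -> R \notin KP ->
  c1 \in C -> c2 \in C -> c1 \in AA K Y -> c2 \in AA K Y -> rk c1 < rk c2 ->
  typ R c1 c2 -> #|Y| < z -> acyclic_on mH (AA K Y) -> False.
Proof.
move=> cK cR nR c1C c2C c1A c2A rlt tR lt ac.
have n12 : c1 != c2 by apply/negP => /eqP E; rewrite E ltnn in rlt.
have Rc : R \in cand c1 c2 by rewrite inE cR tR.
have Rn : R \notin chosen c1 c2 by apply: contra nR; apply: (subsetP (chosen_KP c1C c2C)).
have cf := chosen_full Rc Rn.
have chP : chosen c1 c2 \subset Pcs.
  by apply: subset_trans (chosen_sub c1 c2) _; apply/subsetP => P; rewrite inE => /andP[].
have [P1 [P2 [P1ch P2ch n12P d1 d2]]] :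
  exists P1 P2, [/\ P1 \in chosen c1 c2, P2 \in chosen c1 c2, P1 != P2,
    [disjoint P1 & Y] & [disjoint P2 & Y]].
  by apply: free2 chP _; rewrite cf /quota (negbTE n12) rlt ltnS.
have P1K : P1 \in KP by apply: (subsetP (chosen_KP c1C c2C)).
have P2K : P2 \in KP by apply: (subsetP (chosen_KP c1C c2C)).
have cP1 := KP_Pcs P1K; have cP2 := KP_Pcs P2K.
have c1K : c1 \in K by move: c1A; rewrite !inE => /andP[_ /andP[]].
have c2K : c2 \in K by move: c2A; rewrite !inE => /andP[_ /andP[]].
have nP : forall P c, P \in Pcs -> c \in C -> c \notin P by move=> *; apply: Pcs_notC.
have := subsetP (chosen_sub c1 c2) P1 P1ch; rewrite inE /typ (negbTE n12).
move=> /andP[_ /andP[/existsP [x1 /andP[x1P e1]] /existsP [y1 /andP[y1P f1]]]].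
have := subsetP (chosen_sub c1 c2) P2 P2ch; rewrite inE /typ (negbTE n12).
move=> /andP[_ /andP[/existsP [x2 /andP[x2P e2]] /existsP [y2 /andP[y2P f2]]]].
have PA1 := kept_in_A P1K d1 (kept_in_K cK cP1 x1P c1K e1).
have PA2 := kept_in_A P2K d2 (kept_in_K cK cP2 x2P c1K e2).
apply/negP: ac.
apply: (two_bad c1A c2A n12 PA1 PA2 (comp_disjoint mHsym cP1 cP2 n12P)
   (nP _ _ cP1 c1C) (nP _ _ cP2 c1C) (nP _ _ cP1 c2C) (nP _ _ cP2 c2C)
   x1P (comp_conn mHsym cP1 x1P y1P) y2P (comp_conn mHsym cP2 y2P x2P)).
- by rewrite mHsym.
- exact: f1.
- by rewrite mHsym.
- exact: e2.
Qed.


Lemma B_facts K Y b : K \in components mH S -> b \in BB K Y ->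
  [/\ b \in W, b \notin S2, b \in K & b \notin Y].
Proof.
move=> cK; rewrite !inE => /andP[bY /andP[bS2 bK]].
have bS : b \in S by apply: (subsetP (comp_sub cK)).
split => //; rewrite ?inE bS andbT; by apply: contra bS2 => ->.
Qed.

Lemma R_notKP b : b \notin S2 -> cc mH W b \notin KP.
Proof.
move=> bS2; apply/negP => h; move/negP: bS2; apply.
rewrite /S2 inE; apply/orP; right; apply: (KP_KV h).
apply: cc_self; apply/negPn/negP => bW.
move: h => /KP_Pcs /comp_n0 [x]; rewrite inE => /andP[xW cbx].
rewrite (conn_sym mHsym) in cbx; move/negP: bW; apply; exact: conn_in cbx xW.
Qed.

Lemma adjB_C K Y b a : K \in components mH S -> b \in BB K Y -> a \in AA K Y ->
  0 < mH b a -> a \in C.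
Proof.
move=> cK bB aA e; have [bW bS2 _ _] := B_facts cK bB.
apply/negPn/negP => aC.
have aS2 : a \in S2 by move: aA; rewrite !inE => /andP[_ /andP[]].
have aS : a \in S by apply: (subsetP S2_S).
have aW : a \in W by rewrite inE aC aS.
have cR : cc mH W b \in Pcs by apply: cc_comp.
have aR : a \in cc mH W b by apply: (comp_closed mHsym cR (cc_self _ bW) aW e).
have aKV : a \in KV by move: aS2; rewrite /S2 inE (negbTE aC).
move: aKV => /bigcupP [P PK aP].
have E := comp_disj mHsym (KP_Pcs PK) cR aP aR.
by move: (R_notKP bS2); rewrite -E PK.
Qed.

Lemma prune K Y : K \in components mH S -> #|Y| < z -> acyclic_on mH (AA K Y) ->
  acyclic_on mH (K :\: Y).
Proof.
move=> cK lt ac.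
have E : K :\: Y = AA K Y :|: BB K Y.
  by apply/setP => x; rewrite !inE; case: (x \in C); case: (x \in KV); case: (x \in Y); case: (x \in K).
rewrite E; apply: (lemG mHsym).
- rewrite -setI_eq0; apply/eqP/setP => x; rewrite !inE.
  by case: (x \in C); case: (x \in KV); rewrite ?andbF.
- exact: ac.
- apply: acyc_sub acycW _ (fun _ _ _ _ => leqnn _).
  by apply/subsetP => x /(B_facts cK) [].
- move=> b a bB aA; rewrite leqNgt; apply/negP => e.
  have aC := adjB_C cK bB aA (ltnW e).
  have [bW bS2 _ _] := B_facts cK bB.
  apply: (Dom_loop cK (cc_comp _ bW) (R_notKP bS2) aC aA _ lt ac).
  rewrite /typ eqxx; apply/orP; left; apply/existsP; exists b.
  by rewrite cc_self.
- move=> b1 b2 a1 a2 b1B cb a1A a2A e1 e2.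
  have b2B : b2 \in BB K Y by apply: conn_in cb b1B.
  have aC1 := adjB_C cK b1B a1A e1.
  have aC2 := adjB_C cK b2B a2A e2.
  have [bW1 bS21 _ _] := B_facts cK b1B.
  have [bW2 _ _ _] := B_facts cK b2B.
  have cR := cc_comp mH bW1.
  have b1R : b1 \in cc mH W b1 by apply: cc_self.
  have b2R : b2 \in cc mH W b1.
    rewrite inE bW2 /=; apply: conn_mono cb => //.
    by apply/subsetP => x /(B_facts cK) [].
  have nR := R_notKP bS21.
  case: (eqVneq a1 a2) => [Ea|na].
    case: (eqVneq b1 b2) => [Eb|nb]; first by [].
    exfalso; subst a2.
    apply: (Dom_loop cK cR nR aC1 a1A _ lt ac).
    rewrite /typ eqxx; apply/orP; right; apply/existsP; exists b1.
    rewrite b1R /=; apply/existsP; exists b2; by rewrite b2R nb e1 e2.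
  exfalso.
  have t12 : typ (cc mH W b1) a1 a2.
    rewrite /typ (negbTE na); apply/andP; split; apply/existsP.
      by exists b1; rewrite b1R.
    by exists b2; rewrite b2R.
  case: (ltngtP (rk a1) (rk a2)) => h.
  + exact: (Dom_pair cK cR nR aC1 aC2 a1A a2A h t12 lt ac).
  + by rewrite typ_sym // in t12; exact: (Dom_pair cK cR nR aC2 aC1 a2A a1A h t12 lt ac).
  + by move/rk_inj: h => h; rewrite h eqxx in na.
Qed.


Definition mH2 x y := if (x \in S2) && (y \in S2) then mH x y else 0.

Lemma acyc2 T : T \subset S2 -> acyclic_on mH2 T = acyclic_on mH T.
Proof.
move=> TS; apply: acyc_agree => x y xT yT.
by rewrite /mH2 (subsetP TS _ xT) (subsetP TS _ yT).
Qed.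

Lemma isfvs2 T X : T \subset S2 -> is_fvs mH2 T X = is_fvs mH T X.
Proof.
move=> TS; rewrite /is_fvs acyc2 //; apply: subset_trans TS; apply: subsetDl.
Qed.

Lemma fvs2 T : T \subset S2 -> fvs mH2 T = fvs mH T.
Proof. by move=> TS; rewrite /fvs; apply: eq_bigl => X; rewrite isfvs2. Qed.

Lemma comps2 : components mH2 S2 = components mH S2.
Proof.
have E : adj mH2 S2 =2 adj mH S2.
  move=> x y; rewrite /adj /mH2; by case: (x \in S2); case: (y \in S2).
rewrite /components; apply: eq_imset => x; apply/setP => y.
by rewrite !inE (eq_connect E).
Qed.

Lemma sum_comps (X : {set V}) : X \subset S ->
  #|X| = \sum_(K in components mH S) #|X :&: K|.
Proof.
move=> XS.
have := @set_partition_big _ _ _ addn _ S (fun x => (x \in X : nat)) (comp_partition mHsym S).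
rewrite sum_in_card (setIidPr XS) => ->.
by apply: eq_bigr => K _; rewrite sum_in_card setIC.
Qed.

Lemma fvs_S2 : fvs mH2 S2 = #|C|.
Proof.
apply/eqP; rewrite eqn_leq; apply/andP; split.
  apply: fvs_le; rewrite isfvs2 // /is_fvs /S2 subsetUl /=.
  apply: acyc_sub acycW _ (fun _ _ _ _ => leqnn _).
  by apply: setSD; apply: S2_S.
apply: fvs_ge => X; rewrite isfvs2 // => /andP[XS2 acX].
have XS : X \subset S := subset_trans XS2 S2_S.
case: (boolP [exists K in components mH S, #|X :&: K| < #|C :&: K|]); last first.
  move=> /existsPn h; rewrite (sum_comps XS) (sum_comps CS).
  by apply: leq_sum => K cK; have := h K; rewrite cK /= -leqNgt.
move=> /existsP [K /andP[cK lt]]; exfalso.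
have [fK zK] := compK cK.
have lz : #|X :&: K| < z := leq_trans lt zK.
have acA : acyclic_on mH (AA K (X :&: K)).
  apply: acyc_sub acX _ (fun _ _ _ _ => leqnn _).
  apply/subsetP => x; rewrite !inE => /andP[h /andP[xS2 xK]].
  by rewrite xS2 andbT; move: h; rewrite xK andbT.
have acK := prune cK lz acA.
have : fvs mH K <= #|X :&: K|.
  by apply: fvs_le; rewrite /is_fvs subsetIr acK.
by rewrite fK leqNgt lt.
Qed.

Lemma comp2_fvs K2 : K2 \in components mH2 S2 ->
  fvs mH2 K2 = #|C :&: K2| /\ #|C :&: K2| <= z.
Proof.
rewrite comps2 => cK2.
have K2S2 : K2 \subset S2 := comp_sub cK2.
have [x xK2] := comp_n0 cK2.
have xS : x \in S by apply: (subsetP S2_S); apply: (subsetP K2S2).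
have cK := cc_comp mH xS.
set K := cc mH S x in cK.
have K2K : K2 \subset K := comp_subcomp mHsym S2_S cK2 cK xK2 (cc_self _ xS).
have [fK zK] := compK cK.
clearbody K.
have le2 : #|C :&: K2| <= #|C :&: K| by apply: subset_leq_card; apply: setIS.
split; last exact: leq_trans le2 zK.
rewrite fvs2 //; apply/eqP; rewrite eqn_leq; apply/andP; split.
  apply: fvs_le; rewrite /is_fvs subsetIr /=.
  apply: acyc_sub acycW _ (fun _ _ _ _ => leqnn _).
  apply/subsetP => y; rewrite !inE => /andP[h yK2].
  rewrite yK2 andbT in h; rewrite h /=.
  by apply: (subsetP S2_S); apply: (subsetP K2S2).
apply: fvs_ge => Y /andP[YK2 acY].
rewrite leqNgt; apply/negP => lt.
set Y' := Y :|: ((C :&: K) :\: K2).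
have eD : #|(C :&: K) :\: K2| = #|C :&: K| - #|C :&: K2|.
  by rewrite cardsD -setIA (setIidPr K2K).
have lY' : #|Y'| < #|C :&: K|.
  apply: leq_ltn_trans (_ : #|Y| + #|(C :&: K) :\: K2| < _).
    by rewrite cardsU leq_subr.
  by rewrite eD -{2}(subnKC le2) ltn_add2r.
have Y'K : Y' \subset K.
  rewrite subUset (subset_trans YK2 K2K) /=.
  by apply: subset_trans (subsetDl _ _) (subsetIr _ _).
have acA : acyclic_on mH (AA K Y').
  have E : AA K Y' = (K2 :\: Y) :|: (((S2 :&: K) :\: K2) :\: Y').
    apply/setP => y; move: (subsetP K2S2 y) (subsetP K2K y); rewrite !inE.
    by case: (y \in K2); case: (y \in Y); case: (y \in C); case: (y \in KV);
      case: (y \in K) => //= h1 h2; try (by have := h1 isT); try (by have := h2 isT).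
  rewrite E; apply: (lemG mHsym).
  - rewrite -setI_eq0; apply/eqP/setP => y; rewrite !inE.
    by case: (y \in K2); rewrite ?andbF.
  - exact: acY.
  - apply: acyc_sub acycW _ (fun _ _ _ _ => leqnn _).
    apply/subsetP => y; rewrite !inE => /andP[h1 /andP[h2 /andP[yS2 yK]]].
    have yS2' : y \in S2 by rewrite /S2 inE.
    rewrite (subsetP S2_S y yS2') andbT; move: h1; rewrite yK h2 andbT /=.
    by rewrite negb_or => /andP[].
  - move=> b a bB aA; rewrite leqNgt; apply/negP => e.
    move: aA bB; rewrite !inE => /andP[_ aK2] /andP[_ /andP[bK2 /andP[bS2 _]]].
    have bS2' : b \in S2 by rewrite /S2 inE.
    have := comp_closed mHsym cK2 aK2 bS2'; rewrite mHsym (ltnW e) (negbTE bK2).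
    by move=> /(_ isT).
  - move=> b1 b2 a1 a2 bB _ aA _ e _; exfalso.
    move: aA bB; rewrite !inE => /andP[_ aK2] /andP[_ /andP[bK2 /andP[bS2 _]]].
    have bS2' : b1 \in S2 by rewrite /S2 inE.
    have := comp_closed mHsym cK2 aK2 bS2'; rewrite mHsym e (negbTE bK2).
    by move=> /(_ isT).
have acK := prune cK (leq_trans lY' zK) acA.
have : fvs mH K <= #|Y'| by apply: fvs_le; rewrite /is_fvs Y'K acK.
by rewrite fK leqNgt lY'.
Qed.


Hypothesis hfvc : FVC m C F.

Definition F2 := [set y in F | [exists p in KV, connect (adj m F) p y]].

Lemma F2_F : F2 \subset F.
Proof. by apply/subsetP => y; rewrite inE => /andP[]. Qed.

Lemma W_F : W \subset F.
Proof.
apply/subsetP => x; rewrite inE => /andP[xC xS].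
by move: (subsetP SCF x xS); rewrite inE (negbTE xC).
Qed.

Lemma KV_F2 : KV \subset F2.
Proof.
apply/subsetP => p pK; rewrite inE (subsetP W_F _ (subsetP KV_W _ pK)) /=.
by apply/existsP; exists p; rewrite pK connect0.
Qed.

Lemma S2_CF2 : S2 \subset C :|: F2.
Proof. by apply: setUS KV_F2. Qed.

Lemma F2_step u y : u \in F2 -> y \in F -> 0 < m u y -> y \in F2.
Proof.
rewrite inE => /andP[uF /existsP [p /andP[pK cpu]]] yF e.
rewrite inE yF /=; apply/existsP; exists p; rewrite pK /=.
by apply: connect_trans cpu (connect1 _); rewrite /adj uF yF e.
Qed.

Lemma F2_closed u v : u \in F2 -> connect (adj m F) u v -> connect (adj m F2) u v.
Proof.
move=> uF2 /connectP [p pp ->]; elim: p u uF2 pp => [|w p IH] u uF2 /=.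
  by rewrite connect0.
move=> /andP[/and3P[uF wF e] pp].
have wF2 := F2_step uF2 wF e.
apply: connect_trans (IH w wF2 pp).
by apply: connect1; rewrite /adj uF2 wF2 e.
Qed.

Lemma cc_F2 x : x \in F2 -> cc m F2 x = cc m F x.
Proof.
move=> xF2; apply/setP => y; rewrite /cc !inE; apply/andP/andP => [[yF2 c]|[yF c]].
  split; first by case/andP: yF2.
  by apply: conn_mono c => //; apply: F2_F.
have c2 := F2_closed xF2 c; split => //; have := conn_in c2 xF2; by rewrite inE.
Qed.

Lemma FVC2 : FVC m C F2.
Proof.
case/and3P: hfvc => dCF acF /forallP hT.
apply/and3P; split.
- exact: disjointWr F2_F dCF.
- by apply: acyc_sub acF F2_F (fun _ _ _ _ => leqnn _).
- apply/forallP => T; apply/implyP => cT.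
  have [x xF2 ET] := comps_cc cT.
  have cTF : T \in components m F by rewrite ET cc_F2 //; apply: cc_comp; apply: (subsetP F2_F).
  have := hT T; rewrite cTF /= => h; apply: leq_trans h; rewrite leq_eqVlt; apply/orP; left.
  apply/eqP; rewrite /e; apply: eq_bigr => t tT.
  have tF2 : t \in F2 by rewrite ET in tT; move: tT; rewrite inE => /andP[].
  rewrite [LHS]big_mkcond [RHS]big_mkcond; apply: eq_bigr => y _.
  move: (subsetP F2_F y) (@F2_step t y tF2); rewrite !inE.
  case: (y \in C); case: (y \in F); case: [exists p in KV, connect (adj m F) p y] => //= h1 h2.
  by case: (posnP (m t y)) => // e; have := h2 isT e.
Qed.

Lemma sub2 : subgraph_of m (C :|: F2) S2 mH2.
Proof.
split.
- exact: S2_CF2.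
- by move=> x y; rewrite /mH2; case: ifP => _ //; apply: mHle.
- by move=> x y; rewrite /mH2 andbC mHsym.
- by move=> x y; rewrite /mH2; case: ifP.
Qed.

Lemma cert2 : certificate_of_order z C S2 mH2.
Proof.
split.
  rewrite /is_min_fvs fvs_S2 eqxx andbT isfvs2 // /is_fvs /S2 subsetUl /=.
  apply: acyc_sub acycW _ (fun _ _ _ _ => leqnn _).
  by apply: setSD; apply: S2_S.
exact: comp2_fvs.
Qed.

Lemma antler2 : antler m C F2.
Proof.
rewrite /antler FVC2 /=; apply: fvs_ge => X /andP[XS acX].
rewrite -fvs_S2; apply: leq_trans (fvs_le (X := X :&: S2) _) _.
  rewrite /is_fvs subsetIr /=.
  apply: acyc_sub acX _ _.
    apply/subsetP => x; move: (subsetP S2_CF2 x); rewrite !inE.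
    by case: (x \in X); case: (x \in C); case: (x \in KV) => //= /(_ isT).
  by move=> x y _ _; rewrite /mH2; case: ifP => _ //; apply: mHle.
by apply: subset_leq_card; apply: subsetIl.
Qed.


Lemma card_bigcup_le {T I : finType} (P : pred I) (Fm : I -> {set T}) :
  #|\bigcup_(i | P i) Fm i| <= \sum_(i | P i) #|Fm i|.
Proof.
apply: (big_ind2 (fun (A : {set T}) n => #|A| <= n)) => //.
- by rewrite cards0.
- move=> A1 n1 A2 n2 h1 h2; apply: leq_trans (leq_add h1 h2).
  by rewrite cardsU leq_subr.
Qed.

Lemma comps_F2_card : #|components m F2| <= #|KP|.
Proof.
pose g (P : {set V}) := if [pick x in P] is Some r then cc m F2 r else set0.
apply: leq_trans (leq_imset_card g KP); apply: subset_leq_card.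
apply/subsetP => T cT; have [x xF2 ET] := comps_cc cT.
move: (xF2); rewrite inE => /andP[xF /existsP [p /andP[pK cpx]]].
move: pK => /bigcupP [P PK pP].
apply/imsetP; exists P => //; rewrite /g; case: pickP => [r rP|/(_ p)]; last by rewrite pP.
have cP := KP_Pcs PK.
have crp : connect (adj m F) r p.
  apply: conn_mono (comp_conn mHsym cP rP pP).
    exact: subset_trans (comp_sub cP) W_F.
  by move=> a b h; apply: leq_trans h (mHle a b).
have rF2 : r \in F2 by apply: (subsetP KV_F2); apply: KP_KV PK rP.
have crx := F2_closed rF2 (connect_trans crp cpx).
by rewrite ET; apply: (cc_eq msym); rewrite /cc in_set xF2 crx.
Qed.

Definition conn c1 c2 : bool := connect (adj mH S) c1 c2.

Lemma chosen_bound c1 c2 : c1 \in C -> c2 \in C ->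
  #|chosen c1 c2| <= quota c1 c2 * conn c1 c2.
Proof.
move=> c1C c2C; case cn : (conn c1 c2).
  by rewrite muln1 chosen_card geq_minl.
rewrite muln0 leqn0 cards_eq0; apply/eqP/setP => P; rewrite in_set0.
apply/negbTE/negP => Pch; move/negP: cn; apply.
have := subsetP (chosen_sub c1 c2) P Pch; rewrite inE /typ => /andP[cP].
case: eqP => [<- _|_]; first by apply: connect0.
move=> /andP[/existsP [x /andP[xP e1]] /existsP [y /andP[yP e2]]].
have PS : P \subset S := subset_trans (comp_sub cP) W_S.
have xS := subsetP PS x xP; have yS := subsetP PS y yP.
have c1S := subsetP CS c1 c1C; have c2S := subsetP CS c2 c2C.
apply: connect_trans (connect1 (_ : adj mH S c1 x)) _.
  by rewrite /adj c1S xS mHsym e1.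
apply: connect_trans (conn_mono _ _ (comp_conn mHsym cP xP yP)) (connect1 _).
- exact: PS.
- by [].
- by rewrite /adj yS c2S e2.
Qed.

Definition U c1 := \sum_(c2 in C) ((rk c1 < rk c2) && conn c1 c2 : nat).
Definition D := \sum_(c1 in C) \sum_(c2 in C) ((c1 != c2) && conn c1 c2 : nat).

Lemma KP_bound : #|KP| <= z * #|C| + z.+1 * \sum_(c1 in C) U c1.
Proof.
rewrite /KP; apply: leq_trans (card_bigcup_le _ _) _.
rewrite -sum1_card !big_distrr /= -big_split /=.
apply: leq_sum => c1 c1C.
apply: leq_trans (card_bigcup_le _ _) _.
have h : \sum_(c2 in C) #|chosen c1 c2| <= \sum_(c2 in C) quota c1 c2 * conn c1 c2.
  by apply: leq_sum => c2 c2C; apply: chosen_bound.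
apply: leq_trans h _.
rewrite muln1 /U big_distrr /=.
have cc1 : conn c1 c1 by apply: connect0.
rewrite (bigD1 c1) //= [in X in _ <= _ + X](bigD1 c1 c1C) /= cc1 ltnn /= muln0 add0n muln1.
rewrite {1}/quota eqxx leq_add2l; apply: leq_sum => c2 /andP[_ n21].
rewrite /quota eq_sym (negbTE n21); case: ifP => _; last by rewrite mul0n.
by case: (conn c1 c2).
Qed.

Lemma conn_sym' c1 c2 : conn c1 c2 = conn c2 c1.
Proof. by rewrite /conn conn_sym //; apply: mHsym. Qed.

Lemma U_half : 2 * \sum_(c1 in C) U c1 = D.
Proof.
have E : \sum_(c1 in C) U c1 =
         \sum_(c1 in C) \sum_(c2 in C) ((rk c2 < rk c1) && conn c1 c2 : nat).
  rewrite /U exchange_big /=; apply: eq_bigr => c1 _; apply: eq_bigr => c2 _.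
  by rewrite conn_sym'.
rewrite mul2n -addnn {2}E -big_split /=; apply: eq_bigr => c1 _.
rewrite /U -big_split /=; apply: eq_bigr => c2 _.
case: (conn c1 c2); rewrite ?andbF ?andbT //.
case: (ltngtP (rk c1) (rk c2)) => h.
- by have -> : c1 != c2 by apply/eqP => E'; rewrite E' ltnn in h.
- by have -> : c1 != c2 by apply/eqP => E'; rewrite E' ltnn in h.
- by rewrite (rk_inj h) eqxx.
Qed.

Lemma D_bound : D + #|C| <= z * #|C|.
Proof.
rewrite /D -sum1_card big_distrr /= -big_split /=; apply: leq_sum => c1 c1C.
rewrite muln1.
have cc1 := cc_comp mH (subsetP CS c1 c1C).
have [_ zK] := compK cc1.
apply: leq_trans zK.
rewrite -sum_in_card (bigD1 c1 c1C) /= eqxx /= [in X in _ <= X](bigD1 c1 c1C) /=.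
rewrite cc_self ?(subsetP CS c1 c1C) //= add0n addnC leq_add2l.
apply: leq_sum => c2 /andP[c2C n21]; rewrite eq_sym n21 /= inE (subsetP CS c2 c2C).
by [].
Qed.

Lemma final_count : (2 * #|components m F2| <= 2 * z * #|C| + z.+1 * D)%N.
Proof.
rewrite -U_half mulnCA -mulnA -mulnDr leq_mul2l /=.
exact: leq_trans comps_F2_card KP_bound.
Qed.

End Main.

Unset Implicit Arguments.
Import GRing.Theory Num.Theory.
Local Open Scope ring_scope.

Lemma arith_final (n c z D : nat) : (2*n <= 2*z*c + z.+1*D)%N -> (D + c <= z*c)%N ->
  (2 * n)%N%:Z <= (c)%:Z * ((z%:Z) ^+ 2 + 2 * z%:Z - 1).
Proof.
move=> h1 h2.
have h3 : (z.+1 * (D + c) <= z.+1 * (z * c))%N by rewrite leq_mul2l h2 orbT.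
rewrite expr2.
nia.
Qed.

Theorem lemma14 (V : finType) (m : V -> V -> nat)
  (m_sym : forall x y, m x y = m y x)
  (z : nat) (C F : {set V}) :
  z_antler m z C F ->
  exists F' : {set V},
    [/\ F' \subset F, z_antler m z C F'
      & ((2 * #|components m F'|)%N%:Z <=
          (#|C|)%:Z * ((z%:Z) ^+ 2 + 2 * z%:Z - 1))].
Proof.
move=> [/andP[hfvc _] [S [mH [hsub hcert]]]].
exists (F2 m mH z C F S); split.
- exact: F2_F.
- split; first exact: antler2.
  exists (S2 mH z C S), (mH2 mH z C S); split.
    exact: (sub2 z hsub).
  exact: (cert2 hsub hcert).
- exact: arith_final (final_count m_sym hsub hcert) (D_bound hcert).
Qed.
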